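(* Let $B_n=F(0,1,2,\ldots,n-1)$. For all $0\le k\le n$, $$\mathbf{cf}_{n,k}(p,q)=\mathbf{fT}_{n-k}(B_n,p,q)\qquad\text{and}\qquad \mathbf{Sf}_{n,k}(p,q)=\mathbf{rT}_{n-k}(B_n,p,q).$$
   Context: For $m\ge 1$, a Fibonacci tiling of height $m$ is a tiling of a column of height $m$ by tiles of height 1 and 2 whose bottom-most tile has height 1; $F_m(p,q)=\sum_T q^{\mathrm{one}(T)}p^{\mathrm{two}(T)}$ over such tilings, where $\mathrm{one}(T),\mathrm{two}(T)$ count tiles of height 1, 2 (so $F_1=q$, $F_2=q^2$, $F_m=qF_{m-1}+pF_{m-2}$); there are no tilings of height 0 and $F_0(p,q)=0$. Let $(x)_{\downarrow_{F,p,q,0}}=(x)_{\uparrow_{F,p,q,0}}=1$ and for $k\ge1$, $(x)_{\downarrow_{F,p,q,k}}=x(x-F_1(p,q))\cdots(x-F_{k-1}(p,q))$, $(x)_{\uparrow_{F,p,q,k}}=x(x+F_1(p,q))\cdots(x+F_{k-1}(p,q))$. Define $\mathbf{Sf}_{n,k}(p,q)$ and $\mathbf{cf}_{n,k}(p,q)$ ($0\le k\le n$) by $x^n=\sum_{k=0}^n\mathbf{Sf}_{n,k}(p,q)(x)_{\downarrow_{F,p,q,k}}$ and $(x)_{\uparrow_{F,p,q,n}}=\sum_{k=0}^n\mathbf{cf}_{n,k}(p,q)x^k$. A Ferrers board $F(b_1,\ldots,b_n)$ has column heights $b_1,\ldots,b_n$ from left to right. A Fibonacci file placement of $k$ tilings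 in it is a choice of columns $i_1<\cdots<i_k$ with a Fibonacci tiling of height $b_{i_j}$ in column $i_j$; a Fibonacci rook placement of $k$ tilings is a choice of columns $i_1<\cdots<i_k$ with a Fibonacci tiling of height $b_{i_s-(s-1)}$ in column $i_s$ for each $s$. The weight of a placement is $q^ap^b$ with $a,b$ the total numbers of tiles of height 1, 2. $\mathbf{fT}_k(B,p,q)$ and $\mathbf{rT}_k(B,p,q)$ are the sums of the weights of all file, respectively rook, placements of $k$ tilings (the empty placement has weight 1). *)

(* Defs.v *)
From HB Require Import structures.
From mathcomp Require Import all_boot all_order all_algebra.
Set Implicit Arguments. Unset Strict Implicit. Unset Printing Implicit Defensive.
Import Order.TTheory GRing.Theory Num.Theory.
Local Open Scope ring_scope.

(* A column tiling is a sequence of tile heights listed from the bottom. *)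

Fixpoint all_seqs (m : nat) : seq (seq nat) :=
  match m with
  | 0 => [:: [::]]
  | m'.+1 => [:: [::]] ++ [seq x :: s | x <- [:: 1%N; 2%N], s <- all_seqs m']
  end.

Definition is_fib_tiling (m : nat) (s : seq nat) : bool :=
  [&& head 0%N s == 1%N, all (fun x => (x == 1%N) || (x == 2%N)) s & sumn s == m].

Definition fib_tilings (m : nat) : seq (seq nat) :=
  [seq s <- all_seqs m | is_fib_tiling m s].

Definition n_one (s : seq nat) : nat := count (pred1 1%N) s.
Definition n_two (s : seq nat) : nat := count (pred1 2%N) s.

Definition Fib {R : comRingType} (p q : R) (m : nat) : R :=
  \sum_(s <- fib_tilings m) q ^+ n_one s * p ^+ n_two s.

Definition ffall {R : comRingType} (p q : R) (k : nat) : {poly R} :=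
  if k is 0 then 1 else 'X * \prod_(1 <= i < k) ('X - (Fib p q i)%:P).
Definition frise {R : comRingType} (p q : R) (k : nat) : {poly R} :=
  if k is 0 then 1 else 'X * \prod_(1 <= i < k) ('X + (Fib p q i)%:P).

Definition cf {R : comRingType} (p q : R) (n k : nat) : R := (frise p q n)`_k.

Fixpoint cprod {T : Type} (ls : seq (seq T)) : seq (seq T) :=
  match ls with
  | [::] => [:: [::]]
  | l :: ls' => [seq x :: r | x <- l, r <- cprod ls']
  end.

Definition pl_weight {R : comRingType} (p q : R) (pl : seq (seq nat)) : R :=
  q ^+ sumn (map n_one pl) * p ^+ sumn (map n_two pl).

(* A Ferrers board F(b_1,...,b_n) is given by the list b of column heights;
   column i (1-indexed) is the ordinal i-1 : 'I_(size b), of height nth 0 b (i-1). *)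

Definition cols {n : nat} (S : {set 'I_n}) : seq nat := sort leq (map val (enum S)).

Definition fT {R : comRingType} (p q : R) (b : seq nat) (k : nat) : R :=
  \sum_(S : {set 'I_(size b)} | #|S| == k)
    \sum_(pl <- cprod [seq fib_tilings (nth 0%N b c) | c <- cols S]) pl_weight p q pl.

(* rT_k(B,p,q): the s-th chosen column i_s carries a tiling of height
   b_{i_s-(s-1)}.  With 0-indexed column c = i_s - 1 and j = s - 1 this is
   nth 0 b (c - j). *)
Definition rT {R : comRingType} (p q : R) (b : seq nat) (k : nat) : R :=
  \sum_(S : {set 'I_(size b)} | #|S| == k)
    \sum_(pl <- cprod [seq fib_tilings (nth 0%N b (jc.2 - jc.1))
                        | jc <- zip (iota 0 (size (cols S))) (cols S)])
      pl_weight p q pl.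

Definition Bn (n : nat) : seq nat := iota 0 n.

(* Main.v *)
Require Import Defs.
From HB Require Import structures.
From mathcomp Require Import all_boot all_order all_algebra zify.
Import GRing.Theory.
Local Open Scope ring_scope.

Lemma enum_filt (T : finType) (A : {set T}) : enum A = [seq x <- enum T | x \in A].
Proof. by rewrite enumT /enum_mem. Qed.

Lemma cols_sorted N (S : {set 'I_N}) : sorted leq (map val (enum S)).
Proof.
rewrite enum_filt; apply: (subseq_sorted leq_trans _ (iota_sorted 0 N)).
by rewrite -val_enum_ord map_subseq // filter_subseq.
Qed.

Lemma colsE N (S : {set 'I_N}) : cols S = map val (enum S).
Proof. by rewrite /cols sorted_sort //; [exact: leq_trans | exact: cols_sorted]. Qed.

Lemma size_cols N (S : {set 'I_N}) : size (cols S) = #|S|.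
Proof. by rewrite /cols size_sort size_map cardE. Qed.

Lemma lift_widen N (x : 'I_N) : lift ord_max x = widen_ord (leqnSn N) x.
Proof. by apply: val_inj; exact: lift_max. Qed.

Lemma colsS N (S : {set 'I_N.+1}) :
  cols S = cols [set j | lift ord_max j \in S] ++ (if ord_max \in S then [:: N] else [::]).
Proof.
rewrite !colsE !enum_filt enum_ordSr filter_rcons filter_map.
have -> : [seq x <- enum 'I_N | x \in [set j | lift ord_max j \in S]] =
          [seq x <- enum 'I_N | preim (widen_ord (leqnSn N)) (mem S) x].
  by apply: eq_filter => x; rewrite inE lift_widen.
case: ifP => _; last by rewrite cats0 -map_comp.
by rewrite map_rcons cats1 -map_comp.
Qed.

Definition Fsum {R : comRingType} N (f : seq nat -> R) := \sum_(S : {set 'I_N}) f (cols S).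

Definition hset N (x : {set 'I_N} * bool) : {set 'I_N.+1} :=
  [set i | if unlift ord_max i is Some j then j \in x.1 else x.2].
Definition gset N (S : {set 'I_N.+1}) : {set 'I_N} * bool :=
  ([set j | lift ord_max j \in S], ord_max \in S).

Lemma hsetK N : cancel (@hset N) (@gset N).
Proof.
case=> A b; rewrite /gset /hset; congr (_, _).
  by apply/setP => j; rewrite !inE liftK.
by rewrite inE unlift_none.
Qed.

Lemma gsetK N : cancel (@gset N) (@hset N).
Proof.
move=> S; apply/setP => i; rewrite /gset /hset inE.
by case: unliftP => [j ->|->] /=; rewrite ?inE.
Qed.

Lemma FsumS {R : comRingType} N (f : seq nat -> R) :
  Fsum N.+1 f = Fsum N f + Fsum N (fun s => f (rcons s N)).
Proof.
rewrite /Fsum (reindex (@hset N)); last first.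
  by apply: onW_bij; exists (@gset N); [exact: hsetK | exact: gsetK].
rewrite -(pair_big xpredT xpredT (fun A b => f (cols (@hset N (A, b))))) /=.
rewrite -big_split /=; apply: eq_bigr => A _.
rewrite big_bool /= addrC; congr (_ + _).
  rewrite colsS; have := @hsetK N (A, false); rewrite /gset => [[-> ->]].
  by rewrite cats0.
rewrite colsS; have := @hsetK N (A, true); rewrite /gset => [[-> ->]].
by rewrite cats1.
Qed.

Lemma Fsum0 {R : comRingType} (f : seq nat -> R) : Fsum 0 f = f [::].
Proof.
rewrite /Fsum (big_pred1 set0) ?colsE ?enum_set0 // => S.
by apply/esym/eqP/setP => -[].
Qed.

Section Main.
Variables (R : comRingType) (p q : R).

Lemma Fib0 : Fib p q 0 = 0.
Proof. by rewrite /Fib /fib_tilings /= big_nil. Qed.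

Lemma sum_cprod (T : Type) (g : T -> nat) (L : seq T) :
  \sum_(pl <- cprod [seq fib_tilings (g x) | x <- L]) pl_weight p q pl =
  \prod_(x <- L) Fib p q (g x).
Proof.
elim: L => [|x L IH] /=; first by rewrite big_seq1 big_nil /pl_weight /= mulr1.
rewrite big_allpairs_dep big_cons /Fib big_distrl /=; apply: eq_bigr => y _.
rewrite -IH big_distrr /=; apply: eq_bigr => r _.
by rewrite /pl_weight /= !exprD mulrACA.
Qed.

Lemma fTE b k : fT p q b k =
  Fsum (size b) (fun s => (size s == k)%:R * \prod_(c <- s) Fib p q (nth 0%N b c)).
Proof.
rewrite /fT /Fsum big_mkcond; apply: eq_bigr => S _.
rewrite size_cols; case: eqP => _; last by rewrite mul0r.
by rewrite mul1r sum_cprod.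
Qed.

Definition w b (s : seq nat) :=
  \prod_(jc <- zip (iota 0 (size s)) s) Fib p q (nth 0%N b (jc.2 - jc.1)).

Lemma rTE b k : rT p q b k = Fsum (size b) (fun s => (size s == k)%:R * w b s).
Proof.
rewrite /rT /Fsum big_mkcond; apply: eq_bigr => S _.
rewrite size_cols; case: eqP => _; last by rewrite mul0r.
by rewrite mul1r sum_cprod /w size_cols.
Qed.

Lemma w_rcons b s N : w b (rcons s N) = w b s * Fib p q (nth 0%N b (N - size s)).
Proof.
rewrite /w size_rcons -addn1 iotaD add0n cats1 zip_rcons ?size_iota //.
by rewrite -cats1 big_cat big_seq1.
Qed.

Lemma size_cols_le N (S : {set 'I_N}) : (size (cols S) <= N)%N.
Proof. by rewrite size_cols; apply: leq_trans (max_card _) _; rewrite card_ord. Qed.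

Lemma friseE n : frise p q n = \prod_(i < n) ('X + (Fib p q i)%:P).
Proof.
case: n => [|n]; first by rewrite big_ord0.
rewrite big_ord_recl /frise Fib0 addr0 big_add1 /= big_mkord; congr (_ * _).
Qed.

Lemma Qprod b N : (forall i, (i < N)%N -> nth 0%N b i = i) ->
  Fsum N (fun s => (\prod_(c <- s) Fib p q (nth 0%N b c))%:P * 'X^(N - size s)) =
  \prod_(i < N) ('X + (Fib p q i)%:P).
Proof.
elim: N => [|N IH] hb; first by rewrite Fsum0 big_ord0 /= big_nil mul1r expr0.
rewrite FsumS big_ord_recr /= -IH; last by move=> i hi; apply: hb; apply: ltnW.
rewrite mulrDr; congr (_ + _).
  rewrite /Fsum mulr_suml; apply: eq_bigr => S _.
  by rewrite subSn ?size_cols_le // exprS -mulrA [_ * 'X]mulrC.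
rewrite /Fsum mulr_suml; apply: eq_bigr => S _.
rewrite big_rcons /= size_rcons subSS polyCM hb //.
by rewrite -!mulrA [_%:P * 'X^_]mulrC.
Qed.
End Main.

Section Main2.
Variables (R : comRingType) (p q : R).

Lemma part1 n k : (k <= n)%N -> cf p q n k = fT p q (Bn n) (n - k).
Proof.
move=> kn; rewrite /cf friseE -(@Qprod _ p q (Bn n)); last first.
  by move=> i hi; rewrite /Bn nth_iota.
rewrite fTE /Bn size_iota /Fsum coef_sum; apply: eq_bigr => S _.
rewrite coefCM coefXn mulrC; congr (_%:R * _).
have := @size_cols_le n S; move: (size _) => m hm.
by apply/eqP/eqP; lia.
Qed.
End Main2.

Section Main3.
Variables (R : comRingType) (p q : R).

Lemma ffallS k : ffall p q k.+1 = ffall p q k * ('X - (Fib p q k)%:P).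
Proof.
case: k => [|k]; first by rewrite /ffall big_geq // Fib0 subr0 mulr1 mul1r.
by rewrite /ffall big_nat_recr //= mulrA.
Qed.

Lemma ffall_prod k : ffall p q k = \prod_(i <- iota 0 k) ('X - (Fib p q i)%:P).
Proof.
elim: k => [|k IH]; first by rewrite big_nil.
by rewrite ffallS IH -addn1 iotaD add0n big_cat big_seq1.
Qed.

Lemma size_ffall k : size (ffall p q k) = k.+1.
Proof. by rewrite ffall_prod size_prod_XsubC size_iota. Qed.

Lemma coef_ffall k : (ffall p q k)`_k = 1.
Proof.
have := monic_prod_XsubC (iota 0 k) xpredT (Fib p q).
by rewrite -ffall_prod => /monicP; rewrite lead_coefE size_ffall.
Qed.

Lemma uniq_ffall m (e : nat -> R) :
  \sum_(k < m) (e k)%:P * ffall p q k = 0 -> forall k, (k < m)%N -> e k = 0.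
Proof.
elim: m => [|m IH] H k km; first by [].
move: H; rewrite big_ord_recr /= => H.
have em : e m = 0.
  have := congr1 (fun P : {poly R} => P`_m) H.
  rewrite coef0 coefD coefCM coef_ffall mulr1 coef_sum big1 ?add0r // => i _.
  by rewrite coefCM nth_default ?mulr0 // size_ffall.
move: H; rewrite em polyC0 mul0r addr0 => H.
case: (ltngtP k m) => [h|h|->] //; first exact: IH.
by move: km; rewrite ltnS leqNgt h.
Qed.

Definition T b N m := Fsum N (fun s => (size s == m)%:R * @w R p q b s).

Lemma Tbig b N m : (N < m)%N -> T b N m = 0.
Proof.
move=> h; rewrite /T /Fsum big1 // => S _.
have := @size_cols_le N S; case: eqP => [->|]; last by rewrite mul0r.
by rewrite leqNgt h.
Qed.

Lemma Trec b N m : T b N.+1 m = T b N m +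
  (if m is m'.+1 then Fib p q (nth 0%N b (N - m')) * T b N m' else 0).
Proof.
rewrite /T FsumS; congr (_ + _); case: m => [|m].
  by rewrite /Fsum big1 // => S _; rewrite size_rcons mul0r.
rewrite /Fsum mulr_sumr; apply: eq_bigr => S _.
rewrite size_rcons eqSS w_rcons; case: eqP => [->|]; last by rewrite !(mul0r, mulr0).
by rewrite !mul1r mulrC.
Qed.

Local Arguments ffall : simpl never.

Lemma PT b N : (forall i, (i < N)%N -> nth 0%N b i = i) ->
  'X^N = \sum_(k < N.+1) (T b N (N - k)%N)%:P * ffall p q k.
Proof.
elim: N => [|N IH] hb.
  rewrite big_ord1 expr0 /T Fsum0 /= /w /= big_nil mulr1.
  by rewrite /ffall mulr1.
rewrite exprS mulrC IH; last by move=> i hi; apply: hb; apply: ltnW.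
rewrite mulr_suml.
have E k : ffall p q k * 'X = ffall p q k.+1 + (Fib p q k)%:P * ffall p q k.
  by rewrite ffallS mulrBr [_%:P * _]mulrC subrK.
under eq_bigr => k _ do rewrite -mulrA E mulrDr.
rewrite big_split /=.
under [in RHS]eq_bigr => k _ do rewrite Trec polyCD mulrDl.
rewrite big_split /=; congr (_ + _).
  rewrite [in RHS]big_ord_recl [T _ _ (N.+1 - _)%N]Tbig; last by rewrite subn0.
  rewrite polyC0 mul0r add0r.
  by apply: eq_bigr => k _; rewrite lift0 subSS.
rewrite [in RHS]big_ord_recr /= subnn polyC0 mul0r addr0.
apply: eq_bigr => k _; have kN : (k <= N)%N by rewrite -ltnS ltn_ord.
rewrite subSn // subKn // hb ?ltnS // polyCM mulrA.
by rewrite [(T _ _ _)%:P * _]mulrC.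
Qed.
End Main3.

(* Second conjunct: the coefficients c_k with x^n = sum_k c_k (x)_{down,k}
   (i.e. Sf_{n,k}) are exactly rT_{n-k}(B_n). *)
Theorem mainTheorem5 (R : comRingType) (p q : R) (n : nat) :
  (forall k : nat, (k <= n)%N -> cf p q n k = fT p q (Bn n) (n - k)) /\
  (forall c : nat -> R,
     ('X^n = \sum_(k < n.+1) (c k)%:P * ffall p q k) <->
     (forall k : nat, (k <= n)%N -> c k = rT p q (Bn n) (n - k))).
Proof.
split; first exact: part1.
move=> c.
have hb : forall i, (i < n)%N -> nth 0%N (Bn n) i = i.
  by move=> i hi; rewrite /Bn nth_iota.
have HT k : rT p q (Bn n) (n - k) = @T R p q (Bn n) n (n - k)%N.
  by rewrite rTE /Bn size_iota.
have PTn := @PT R p q (Bn n) n hb.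
split.
- move=> H k kn.
  have H0 : \sum_(k < n.+1) (c k - @T R p q (Bn n) n (n - k)%N)%:P * ffall p q k = 0.
    under eq_bigr => i _ do rewrite polyCB mulrBl.
    by rewrite sumrB -H -PTn subrr.
  have := @uniq_ffall R p q n.+1 (fun k => c k - @T R p q (Bn n) n (n - k)%N) H0 k; rewrite ltnS => /(_ kn) /eqP.
  by rewrite subr_eq0 HT => /eqP.
- move=> H; rewrite PTn; apply: eq_bigr => k _.
  by rewrite H -?HT // -ltnS.
Qed.
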